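(* Let $k\ge 1$. For $j=1,\dots,k$ let $c_{a,j},c_{c,j}>0$, let $r_{a,j}:(0,\infty)\to(0,\infty)$ be positive, decreasing and at least twice continuously differentiable, and let $r_{c,j}:(0,\infty)\to(0,\infty)$ be positive, increasing and at least twice continuously differentiable. Let $w_j:(0,\infty)\to(0,\infty)$ and $\rho_j:(0,\infty)\to[-1,1]$ be given functions with $1-\rho_j^2(n)\le c_{a,j}r_{a,j}(n)$ and $w_j(n)\le c_{c,j}r_{c,j}(n)$; set $n_0^*=0$, $w_0(n_0^* )=1$. For a budget $p$, define sequentially: $u_1(n_1)=\frac{1}{p-n_1}\big(c_{a,1}r_{a,1}(n_1)+c_{c,1}r_{c,1}(n_1)\big)$ on $[1,p-1]$ with unique minimizer $n_1^*$, and for $j=2,\dots,k$, $$u_j(n_j)=\frac{1}{p_{j-1}-n_j}\Big(\kappa_{j-1}+\hat c_{a,j}r_{a,j}(n_j)+c_{c,j}r_{c,j}(n_j)\Big)\ \text{on } [1,p_{j-1}-1],$$ with unique minimizer $n_j^*$, where $p_{j-1}=p-\sum_{i=1}^{j-1}n_i^*$, $\kappa_{j-1}=\sum_{i=0}^{j-2}w_i(n_i^* )(1-\rho_{i+1}^2(n_{i+1}^* ))$, $\hat c_{a,j}=w_{j-1}(n_{j-1}^* )c_{a,j}$ (so $\hat c_{a,1}=c_{a,1}$). Assume that for each $j=1,\dots,k$, $$\hat c_{a,j}\,r_{a,j}''(n)+c_{c,j}\,r_{c,j}''(n)>0\quad\text{for all } n\in(0,\infty),$$ and that there exists $\bar n_j\in(0,\infty)$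 with $$\hat c_{a,j}\,r_{a,j}'(\bar n_j)+c_{c,j}\,r_{c,j}'(\bar n_j)=0.$$ Then there exist bounds $\bar n_1^*,\dots,\bar n_k^*$, independent of the budget $p$, such that $n_j^*\le \bar n_j^*$ for $j=1,\dots,k$.
   Context: Here $n_j$ is the number of high-fidelity evaluations used to train the $j$-th low-fidelity model in a context-aware multi-fidelity Monte Carlo estimator, $p$ is the total budget in units of high-fidelity evaluations, and $u_j$ is (up to constant factors) an upper bound of the estimator's mean-squared error in $n_j$ with the previously chosen $n_1^*,\dots,n_{j-1}^*$ fixed; the budgets are assumed large enough that all intervals $[1,p_{j-1}-1]$ are nonempty, and under the convexity hypotheses each $u_j$ has a unique minimizer $n_j^*$ there. *)

(* Defs.v *)
From Stdlib Require Import Reals.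
From Coquelicot Require Import Coquelicot.
Open Scope R_scope.

Fixpoint sumR (f : nat -> R) (n : nat) : R :=
  match n with O => 0 | S m => sumR f m + f m end.

Definition C2_pos (f : R -> R) : Prop :=
  forall x, 0 < x ->
    ex_derive f x /\ ex_derive (Derive f) x /\ continuous (Derive_n f 2) x.

Definition is_unique_argmin (f : R -> R) (a b x : R) : Prop :=
  a <= x <= b /\
  forall y, a <= y <= b -> f x <= f y /\ (f y = f x -> y = x).

(* w, rho : indexed families; ns : j |-> n_j^ * (for a fixed budget) *)

(* W i = w_i(n_i^ * ), with the convention w_0(n_0^ * ) = 1 *)
Definition Wv (w : nat -> R -> R) (ns : nat -> R) (i : nat) : R :=
  match i with O => 1 | _ => w i (ns i) end.

(* kappa_{j-1} = sum_{i=0}^{j-2} w_i(n_i^ * ) (1 - rho_{i+1}(n_{i+1}^ * )^2) *)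
Definition kappa (w rho : nat -> R -> R) (ns : nat -> R) (j : nat) : R :=
  sumR (fun i => Wv w ns i * (1 - (rho (S i) (ns (S i)))^2)) (j - 1).

(* hat c_{a,j} = w_{j-1}(n_{j-1}^ * ) c_{a,j}  (= c_{a,1} for j = 1) *)
Definition chat (w : nat -> R -> R) (ns : nat -> R) (c_a : nat -> R) (j : nat) : R :=
  Wv w ns (j - 1) * c_a j.

(* p_{j-1} = p - sum_{i=1}^{j-1} n_i^ *  (= p for j = 1) *)
Definition pbud (ns : nat -> R) (p : R) (j : nat) : R :=
  p - sumR (fun i => ns (S i)) (j - 1).

Definition u (w rho : nat -> R -> R) (ns : nat -> R) (c_a c_c : nat -> R)
  (r_a r_c : nat -> R -> R) (p : R) (j : nat) (n : R) : R :=
  (kappa w rho ns j + chat w ns c_a j * r_a j n + c_c j * r_c j n) / (pbud ns p j - n).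

Definition admissible (k : nat) (ns : nat -> R) (p : R) : Prop :=
  forall j, (1 <= j <= k)%nat -> 1 <= pbud ns p j - 1.

(* Main.v *)
Require Import Defs.
From Stdlib Require Classical_Prop ClassicalEpsilon.
From Stdlib Require Import Reals Lra Lia.
From Coquelicot Require Import Coquelicot.
Open Scope R_scope.

Lemma sumR_nonneg f n : (forall i, (i < n)%nat -> 0 <= f i) -> 0 <= sumR f n.
Proof.
  induction n as [|n IH]; simpl; intros H. lra.
  assert (0 <= sumR f n) by (apply IH; intros; apply H; lia).
  assert (0 <= f n) by (apply H; lia). lra.
Qed.

Lemma frac_le K x y P n : 1 <= n -> n <= P - 1 -> 0 <= K -> 0 < y ->
  (K + x) / (P - n) <= (K + y) / (P - 1) -> x <= y.
Proof.
  intros H1 H2 HK Hy H.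
  assert (HPn : 0 < P - n) by lra. assert (HP1 : 0 < P - 1) by lra.
  assert (H' : (K + x) / (P - n) * ((P - n) * (P - 1)) <= (K + y) / (P - 1) * ((P - n) * (P - 1))).
  { apply Rmult_le_compat_r; [apply Rmult_le_pos|]; lra. }
  replace ((K + x) / (P - n) * ((P - n) * (P - 1))) with ((K + x) * (P - 1)) in H' by (field; lra).
  replace ((K + y) / (P - 1) * ((P - n) * (P - 1))) with ((K + y) * (P - n)) in H' by (field; lra).
  assert (E : x * (P - 1) <= y * (P - 1)).
  { assert (0 <= K * (n - 1)) by (apply Rmult_le_pos; lra).
    assert (0 <= y * (n - 1)) by (apply Rmult_le_pos; lra).
    nra. }
  apply Rmult_le_reg_r with (P - 1); lra.
Qed.
Lemma mvt_pos (f df : R -> R) a b : 0 < a -> a < b ->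
  (forall x, 0 < x -> is_derive f x (df x)) ->
  exists c, a <= c <= b /\ f b - f a = df c * (b - a).
Proof.
  intros Ha Hab Hd.
  destruct (MVT_gen f a b df) as [c [Hc Heq]].
  - intros x Hx. apply Hd. rewrite Rmin_left in Hx by lra. lra.
  - intros x Hx. rewrite Rmin_left in Hx by lra. apply continuity_pt_filterlim.
    apply (@ex_derive_continuous R_AbsRing R_NormedModule). exists (df x). apply Hd. lra.
  - exists c. rewrite Rmin_left in Hc by lra. rewrite Rmax_right in Hc by lra. auto.
Qed.

Lemma calc (ra rc : R -> R) (a c T : R) : 0 < a -> 0 < c ->
  (forall x y, 0 < x -> x < y -> ra y < ra x) ->
  (forall x, 0 < x -> 0 < rc x) -> C2_pos ra -> C2_pos rc ->
  (forall x, 0 < x -> 0 < a * Derive_n ra 2 x + c * Derive_n rc 2 x) ->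
  forall nb, 0 < nb -> a * Derive ra nb + c * Derive rc nb = 0 ->
  (forall x, 1 <= x -> rc x <= T) -> False.
Proof.
  intros Ha Hc Hdec Hrcp Cra Crc Hconv nb Hnb Hstat Hbd.
  set (D := fun x => a * Derive ra x + c * Derive rc x).
  set (g := fun x => a * ra x + c * rc x).
  assert (HD : forall x, 0 < x -> is_derive D x (a * Derive_n ra 2 x + c * Derive_n rc 2 x)).
  { intros x Hx. destruct (Cra x Hx) as [_ [H1 _]]. destruct (Crc x Hx) as [_ [H2 _]].
    unfold D. apply (is_derive_plus (fun y => a * Derive ra y) (fun y => c * Derive rc y));
    apply is_derive_scal; apply Derive_correct; auto. }
  assert (Hg : forall x, 0 < x -> is_derive g x (D x)).
  { intros x Hx. destruct (Cra x Hx) as [H1 _]. destruct (Crc x Hx) as [H2 _].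
    unfold g, D. apply (is_derive_plus (fun y => a * ra y) (fun y => c * rc y));
    apply is_derive_scal; apply Derive_correct; auto. }
  set (D2 := fun x => a * Derive_n ra 2 x + c * Derive_n rc 2 x).
  assert (Hd1 : 0 < D (nb + 1)).
  { destruct (mvt_pos D D2 nb (nb+1)) as [z [Hz Heq]]; try lra. exact HD.
    assert (0 < D2 z) by (apply Hconv; lra).
    assert (D nb = 0) by exact Hstat.
    replace (nb + 1 - nb) with 1 in Heq by ring. lra. }
  set (d := D (nb+1)).
  assert (Hd0 : 0 < d) by exact Hd1.
  assert (Hd2 : forall x, nb + 1 <= x -> d <= D x).
  { intros x Hx. destruct (Req_dec x (nb+1)) as [->|Hne]. unfold d; lra.
    destruct (mvt_pos D D2 (nb+1) x) as [z [Hz Heq]]; try lra. exact HD.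
    assert (0 < D2 z) by (apply Hconv; lra).
    assert (0 <= D2 z * (x - (nb+1))) by (apply Rmult_le_pos; lra). unfold d. lra. }
  assert (HT : 0 < T) by (specialize (Hbd 1 (Rle_refl 1)); specialize (Hrcp 1 Rlt_0_1); lra).
  set (L := c * T / d + 1).
  assert (HL : d * L = c * T + d) by (unfold L; field; apply Rgt_not_eq; exact Hd1).
  assert (HL0 : 0 < L) by (unfold L; assert (0 < c * T / d) by (apply Rdiv_lt_0_compat; [apply Rmult_lt_0_compat; assumption | exact Hd1]); lra).
  destruct (mvt_pos g D (nb+1) (nb+1+L)) as [z [Hz Heq]]; try lra. exact Hg.
  assert (d <= D z) by (apply Hd2; lra).
  assert (ra (nb+1+L) < ra (nb+1)) by (apply Hdec; lra).
  assert (rc (nb+1+L) <= T) by (apply Hbd; lra).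
  assert (0 < rc (nb+1)) by (apply Hrcp; lra).
  unfold g in Heq. replace (nb + 1 + L - (nb + 1)) with L in Heq by ring.
  assert (d * L <= D z * L) by (apply Rmult_le_compat_r; lra).
  assert (a * ra (nb+1+L) < a * ra (nb+1)) by (apply Rmult_lt_compat_l; lra).
  assert (c * rc (nb+1+L) <= c * T) by (apply Rmult_le_compat_l; lra).
  assert (0 < c * rc (nb+1)) by (apply Rmult_lt_0_compat; lra).
  cbv beta in Heq. lra.
Qed.
Theorem proposition4
  (k : nat) (hk : (1 <= k)%nat)
  (c_a c_c : nat -> R) (r_a r_c w rho : nat -> R -> R)
  (nstar : R -> nat -> R)
  (Hc : forall j, (1 <= j <= k)%nat -> 0 < c_a j /\ 0 < c_c j)
  (Hra : forall j, (1 <= j <= k)%nat ->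
     (forall x, 0 < x -> 0 < r_a j x) /\
     (forall x y, 0 < x -> x < y -> r_a j y < r_a j x) /\
     C2_pos (r_a j))
  (Hrc : forall j, (1 <= j <= k)%nat ->
     (forall x, 0 < x -> 0 < r_c j x) /\
     (forall x y, 0 < x -> x < y -> r_c j x < r_c j y) /\
     C2_pos (r_c j))
  (Hw : forall j, (1 <= j <= k)%nat -> forall x, 0 < x ->
     0 < w j x /\ w j x <= c_c j * r_c j x)
  (Hrho : forall j, (1 <= j <= k)%nat -> forall x, 0 < x ->
     -1 <= rho j x <= 1 /\ 1 - (rho j x)^2 <= c_a j * r_a j x)
  (Hn0 : forall p, nstar p 0%nat = 0)
  (Hmin : forall p, admissible k (nstar p) p ->
     forall j, (1 <= j <= k)%nat ->
     is_unique_argmin (u w rho (nstar p) c_a c_c r_a r_c p j)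
       1 (pbud (nstar p) p j - 1) (nstar p j))
  (Hconv : forall p, admissible k (nstar p) p ->
     forall j, (1 <= j <= k)%nat -> forall x, 0 < x ->
     0 < chat w (nstar p) c_a j * Derive_n (r_a j) 2 x
         + c_c j * Derive_n (r_c j) 2 x)
  (Hstat : forall p, admissible k (nstar p) p ->
     forall j, (1 <= j <= k)%nat ->
     exists nb, 0 < nb /\
       chat w (nstar p) c_a j * Derive (r_a j) nb + c_c j * Derive (r_c j) nb = 0) :
  exists nbar : nat -> R,
    forall p, admissible k (nstar p) p ->
    forall j, (1 <= j <= k)%nat -> nstar p j <= nbar j.
Proof.
  assert (F1 : forall p, admissible k (nstar p) p -> forall j, (1 <= j <= k)%nat ->
            1 <= nstar p j <= pbud (nstar p) p j - 1).
  { intros p Hp j Hj. exact (proj1 (Hmin p Hp j Hj)). }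
  assert (F2 : forall p, admissible k (nstar p) p -> forall i, (i <= k)%nat ->
            0 < Wv w (nstar p) i).
  { intros p Hp [|i] Hi; simpl. lra.
    apply Hw. lia. destruct (F1 p Hp (S i)) as [? _]; [lia|lra]. }
  assert (F3 : forall p, admissible k (nstar p) p -> forall j, (1 <= j <= k)%nat ->
            0 <= kappa w rho (nstar p) j).
  { intros p Hp j Hj. unfold kappa. apply sumR_nonneg. intros i Hi.
    apply Rmult_le_pos. apply Rlt_le, F2; auto; lia.
    assert (Hpos : 0 < nstar p (S i)) by (destruct (F1 p Hp (S i)) as [? _]; [lia|lra]).
    destruct (Hrho (S i) ltac:(lia) _ Hpos) as [[Hl Hu] _].
    simpl. nra. }
  assert (F4 : forall p, admissible k (nstar p) p -> forall j, (1 <= j <= k)%nat ->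
            0 < chat w (nstar p) c_a j).
  { intros p Hp j Hj. unfold chat. apply Rmult_lt_0_compat. apply F2; auto; lia.
    apply Hc; auto. }
  assert (F6 : forall p, admissible k (nstar p) p -> forall j, (1 <= j <= k)%nat ->
            c_c j * r_c j (nstar p j) <= chat w (nstar p) c_a j * r_a j 1 + c_c j * r_c j 1).
  { intros p Hp j Hj.
    destruct (Hmin p Hp j Hj) as [Hr Hm].
    assert (Hadm := Hp j Hj).
    destruct (Hm 1 ltac:(lra)) as [Hle _].
    unfold u in Hle.
    set (a := chat w (nstar p) c_a j) in *.
    assert (Ha := F4 p Hp j Hj). fold a in Ha.
    destruct (Hra j Hj) as [Hrap [Hrad _]]. destruct (Hrc j Hj) as [Hrcp [Hrcd _]].
    destruct (Hc j Hj) as [_ Hcc].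
    assert (0 < a * r_a j 1 + c_c j * r_c j 1).
    { assert (0 < a * r_a j 1) by (apply Rmult_lt_0_compat; [lra | apply Hrap; lra]).
      assert (0 < c_c j * r_c j 1) by (apply Rmult_lt_0_compat; [lra | apply Hrcp; lra]). lra. }
    rewrite !Rplus_assoc in Hle.
    pose proof (frac_le _ _ _ _ _ (proj1 Hr) (proj2 Hr) (F3 p Hp j Hj) H Hle) as Hg.
    assert (0 < a * r_a j (nstar p j)) by (apply Rmult_lt_0_compat; auto; apply Hrap; lra).
    lra. }
  assert (Step : forall j, (1 <= j <= k)%nat -> forall C,
            (forall p, admissible k (nstar p) p -> chat w (nstar p) c_a j <= C) ->
            exists B, forall p, admissible k (nstar p) p -> nstar p j <= B).
  { intros j Hj C HC.
    destruct (Hra j Hj) as [Hrap [Hrad Hra2]]. destruct (Hrc j Hj) as [Hrcp [Hrcd Hrc2]].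
    destruct (Hc j Hj) as [Hca Hcc].
    set (T := C * r_a j 1 + c_c j * r_c j 1).
    destruct (Classical_Prop.classic (exists X, 1 <= X /\ T < c_c j * r_c j X)) as [[X [HX1 HX]]|Hno].
    - exists X. intros p Hp.
      destruct (Rle_or_lt (nstar p j) X) as [|Hlt]; auto. exfalso.
      assert (H1 := F6 p Hp j Hj). assert (H2 := HC p Hp).
      assert (r_c j X < r_c j (nstar p j)) by (apply Hrcd; lra).
      assert (c_c j * r_c j X < c_c j * r_c j (nstar p j)) by (apply Rmult_lt_compat_l; lra).
      assert (chat w (nstar p) c_a j * r_a j 1 <= C * r_a j 1)
        by (apply Rmult_le_compat_r; auto; apply Rlt_le, Hrap; lra).
      unfold T in HX. lra.
    - exists 0. intros p Hp. exfalso.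
      destruct (Hstat p Hp j Hj) as [nb [Hnb Hs]].
      apply (calc (r_a j) (r_c j) (chat w (nstar p) c_a j) (c_c j) (T / c_c j)
               (F4 p Hp j Hj) Hcc Hrad Hrcp Hra2 Hrc2 (Hconv p Hp j Hj) nb Hnb Hs).
      intros x Hx. apply Rmult_le_reg_l with (c_c j); auto.
      replace (c_c j * (T / c_c j)) with T by (field; lra).
      destruct (Rle_or_lt (c_c j * r_c j x) T); auto. exfalso. apply Hno. exists x. auto. }
  assert (Ind : forall m, (1 <= m <= k)%nat ->
            exists B, forall p, admissible k (nstar p) p -> nstar p m <= B).
  { induction m as [|m IH]; intros Hm. lia.
    destruct m as [|m'].
    - apply (Step 1%nat Hm (c_a 1%nat)). intros p Hp. unfold chat. simpl. lra.
    - destruct IH as [B HB]. lia.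
      apply (Step (S (S m')) Hm (c_c (S m') * r_c (S m') B * c_a (S (S m')))).
      intros p Hp. unfold chat. replace (S (S m') - 1)%nat with (S m') by lia. simpl.
      destruct (F1 p Hp (S m')) as [Hn _]. lia.
      destruct (Hw (S m') ltac:(lia) (nstar p (S m')) ltac:(lra)) as [_ Hw2].
      assert (r_c (S m') (nstar p (S m')) <= r_c (S m') B).
      { destruct (Req_dec (nstar p (S m')) B) as [->|Hne]. lra.
        apply Rlt_le, (proj1 (proj2 (Hrc (S m') ltac:(lia)))). lra.
        specialize (HB p Hp). lra. }
      destruct (Hc (S m') ltac:(lia)) as [_ Hcc]. destruct (Hc (S (S m')) Hm) as [Hca _].
      apply Rmult_le_compat_r. lra.
      apply Rle_trans with (1 := Hw2). apply Rmult_le_compat_l; lra. }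
  exists (fun j => match Compare_dec.le_dec 1 j with
          | left _ => match Compare_dec.le_dec j k with
                      | left _ => proj1_sig (ClassicalEpsilon.constructive_indefinite_description _
                                     (Ind j ltac:(lia)))
                      | right _ => 0 end
          | right _ => 0 end).
  intros p Hp j Hj.
  destruct (Compare_dec.le_dec 1 j); [|lia]. destruct (Compare_dec.le_dec j k); [|lia].
  destruct (ClassicalEpsilon.constructive_indefinite_description _ _) as [B HB]. simpl.
  apply HB; auto.
Qed.
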